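(* Let $\mathbf v\in\mathbb R_{<0}^{n\times m}$. There is a bijection $f\leftrightarrow G_f$ between the faces of the Pareto frontier of $\mathcal U(\mathbf v)$ and the set $\mathrm{MWW}(\mathbf v)$ such that, for every face $f$, an allocation $\mathbf z$ satisfies $\mathbf u(\mathbf z)\in f$ if and only if $G_{\mathbf z}$ is a subgraph of $G_f$.
   Context: Setup: agents $[n]$, chores $[m]$, allocations $\mathbf z\in\mathbb R^{n\times m}_{\ge0}$ with column sums $1$, $u_i(\mathbf z_i)=\sum_jv_{i,j}z_{i,j}$. $\mathcal U(\mathbf v)=\{\mathbf u(\mathbf z):\mathbf z\text{ allocation}\}\subset\mathbb R^n$ (a convex polytope). A face of the Pareto frontier is a set of the form $\arg\max_{\mathbf u\in\mathcal U(\mathbf v)}\langle\tau,\mathbf u\rangle$ for some $\tau\in\mathbb R^n_{>0}$. The consumption graph $G_{\mathbf z}$ has edge $(i,j)$ iff $z_{i,j}>0$. For $\tau\in\mathbb R^n_{>0}$, $G_\tau(\mathbf v)$ is the bipartite graph on $([n],[m])$ with edge $(i,j)$ iff $\tau_i|v_{i,j}|\le\tau_{i'}|v_{i',j}|$ for all $i'$; $\mathrm{MWW}(\mathbf v)=\{G_\tau(\mathbf v):\tau\in\mathbb R^n_{>0}\}$. *)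

(* Defs.v *)
(* Reals generalized to an arbitrary realFieldType R
   (the statement is purely linear/order-theoretic). *)
From HB Require Import structures.
From mathcomp Require Import all_boot all_order all_algebra.
Set Implicit Arguments. Unset Strict Implicit. Unset Printing Implicit Defensive.
Import Order.TTheory GRing.Theory Num.Theory.
Local Open Scope ring_scope.

(* Agents are 'I_n, chores are 'I_m; valuations v : 'M[R]_(n, m). *)

Definition allocation (R : realFieldType) (n m : nat) (z : 'M[R]_(n, m)) : Prop :=
  (forall i j, 0 <= z i j) /\ (forall j, \sum_(i < n) z i j = 1).

Definition util (R : realFieldType) (n m : nat) (v z : 'M[R]_(n, m)) : 'rV[R]_n :=
  \row_(i < n) \sum_(j < m) v i j * z i j.

Definition in_U (R : realFieldType) (n m : nat) (v : 'M[R]_(n, m)) (u : 'rV[R]_n) : Prop :=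
  exists z, allocation z /\ u = util v z.

Definition inner (R : realFieldType) (n : nat) (tau u : 'rV[R]_n) : R :=
  \sum_(i < n) tau 0 i * u 0 i.

Definition face_of (R : realFieldType) (n m : nat) (v : 'M[R]_(n, m)) (tau : 'rV[R]_n)
  : 'rV[R]_n -> Prop :=
  fun u => in_U v u /\ (forall u', in_U v u' -> inner tau u' <= inner tau u).

Definition is_face (R : realFieldType) (n m : nat) (v : 'M[R]_(n, m))
  (F : 'rV[R]_n -> Prop) : Prop :=
  exists tau : 'rV[R]_n, (forall i, 0 < tau 0 i) /\ F = face_of v tau.

(* bipartite graphs on ([n],[m]) are represented by their edge sets *)
Definition consumption_graph (R : realFieldType) (n m : nat) (z : 'M[R]_(n, m))
  : {set 'I_n * 'I_m} :=
  [set p | 0 < z p.1 p.2].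

Definition G_tau (R : realFieldType) (n m : nat) (v : 'M[R]_(n, m)) (tau : 'rV[R]_n)
  : {set 'I_n * 'I_m} :=
  [set p | [forall i' : 'I_n,
     tau 0 p.1 * `|v p.1 p.2| <= tau 0 i' * `|v i' p.2|]].

Definition in_MWW (R : realFieldType) (n m : nat) (v : 'M[R]_(n, m))
  (G : {set 'I_n * 'I_m}) : Prop :=
  exists tau : 'rV[R]_n, (forall i, 0 < tau 0 i) /\ G = G_tau v tau.

(* Main.v *)
Require Import Defs.
From HB Require Import structures.
From mathcomp Require Import all_boot all_order all_algebra.
From mathcomp Require Import ring.
From Stdlib Require Import ClassicalEpsilon FunctionalExtensionality PropExtensionality.
Import Order.TTheory GRing.Theory Num.Theory.
Local Open Scope ring_scope.
Section K.
Variables (R : realFieldType) (n m : nat) (v : 'M[R]_(n, m)) (hv : forall i j, v i j < 0).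
Variables (tau : 'rV[R]_n) (htau : forall i, 0 < tau 0 i) (x0 : 'I_n).
Definition ww i j := tau 0 i * `|v i j|.
Definition kmin (j : 'I_m) : 'I_n := Order.arg_min x0 xpredT (fun i => ww i j).
Lemma kminP j i : ww (kmin j) j <= ww i j.
Proof. rewrite /kmin; case: arg_minP => // k _ H; exact: H. Qed.
Definition DD (z : 'M[R]_(n, m)) := \sum_(j < m) \sum_(i < n) (ww i j - ww (kmin j) j) * z i j.
Definition Mn := \sum_(j < m) ww (kmin j) j.

Lemma inner_eq z : allocation z -> inner tau (util v z) = - (DD z + Mn).
Proof.
case=> hz0 hz1; rewrite /inner.
under eq_bigr => i _ do rewrite mxE mulr_sumr.
rewrite exchange_big /DD /Mn -big_split /= -sumrN; apply: eq_bigr => j _.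
transitivity (- \sum_(i < n) ((ww i j - ww (kmin j) j) * z i j + ww (kmin j) j * z i j)).
  rewrite -sumrN; apply: eq_bigr => i _; rewrite /ww ltr0_norm //; ring.
by rewrite big_split /= -mulr_sumr hz1 mulr1.
Qed.

Lemma DD_ge0 z : allocation z -> 0 <= DD z.
Proof.
case=> hz0 _; apply: sumr_ge0 => j _; apply: sumr_ge0 => i _.
by apply: mulr_ge0 => //; rewrite subr_ge0 kminP.
Qed.

Definition zstar : 'M[R]_(n, m) := \matrix_(i, j) (i == kmin j)%:R.

Lemma zstar_alloc : allocation zstar.
Proof.
split=> [i j|j]; first by rewrite mxE ler0n.
rewrite (bigD1 (kmin j)) //= mxE eqxx big1 ?addr0 // => i /negbTE hi.
by rewrite mxE hi.
Qed.

Lemma DD_zstar : DD zstar = 0.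
Proof.
apply: big1 => j _; apply: big1 => i _; rewrite mxE.
by case: eqP => [->|_]; rewrite ?subrr ?mul0r ?mulr0.
Qed.

Lemma face_DD z : allocation z -> face_of v tau (util v z) <-> DD z = 0.
Proof.
move=> hz; split.
- case=> _ /(_ _ (ex_intro _ zstar (conj zstar_alloc erefl))).
  rewrite !inner_eq //; last exact: zstar_alloc.
  have -> := DD_zstar. rewrite lerN2 lerD2r => h.
  by apply/eqP; rewrite eq_le h DD_ge0.
- move=> h0; split; first by exists z.
  move=> u' [z' [hz' ->]]; rewrite !inner_eq // lerN2 lerD2r h0.
  exact: DD_ge0.
Qed.

Lemma DD_graph z : allocation z ->
  DD z = 0 <-> consumption_graph z \subset G_tau v tau.
Proof.
move=> hz; have [hz0 _] := hz; split.
- move=> h; apply/subsetP => -[i j]; rewrite !inE /= => hp.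
  have h1 : \sum_(i < n) (ww i j - ww (kmin j) j) * z i j = 0.
    apply: (psumr_eq0P _ h) => // j' _.
    by apply: sumr_ge0 => i' _; apply: mulr_ge0 => //; rewrite subr_ge0 kminP.
  have h2 : (ww i j - ww (kmin j) j) * z i j = 0.
    apply: (psumr_eq0P _ h1) => // i' _.
    by apply: mulr_ge0 => //; rewrite subr_ge0 kminP.
  move/eqP: h2; rewrite mulf_eq0 (gt_eqF hp) orbF subr_eq0 => /eqP he.
  apply/forallP => i'; rewrite -/(ww i j) -/(ww i' j) he; exact: kminP.
- move/subsetP => hs; apply: big1 => j _; apply: big1 => i _.
  have := hz0 i j; rewrite le_eqVlt => /orP [/eqP <-|hp]; first by rewrite mulr0.
  have /hs : (i, j) \in consumption_graph z by rewrite inE.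
  rewrite inE /= => /forallP /(_ (kmin j)) h.
  have -> : ww i j = ww (kmin j) j by apply/eqP; rewrite eq_le h kminP.
  by rewrite subrr mul0r.
Qed.

End K.

Lemma key (R : realFieldType) (n m : nat) (v : 'M[R]_(n, m))
  (hv : forall i j, v i j < 0) (tau : 'rV[R]_n) (htau : forall i, 0 < tau 0 i)
  (z : 'M[R]_(n, m)) : allocation z ->
  face_of v tau (util v z) <-> consumption_graph z \subset G_tau v tau.
Proof.
move=> hz; case: n v hv tau htau z hz => [|n] v hv tau htau z hz.
  split=> _; first by apply/subsetP => -[[i ?] ?].
  split; first by exists z.
  by move=> u' _; rewrite /inner !big_ord0.
rewrite (@face_DD _ _ _ v hv tau ord0 z hz); exact: DD_graph.
Qed.

Lemma face_graph_sub (R : realFieldType) (n m : nat) (v : 'M[R]_(n, m))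
  (hv : forall i j, v i j < 0) (tau tau' : 'rV[R]_n) (htau : forall i, 0 < tau 0 i)
  (htau' : forall i, 0 < tau' 0 i) :
  face_of v tau = face_of v tau' -> G_tau v tau \subset G_tau v tau'.
Proof.
move=> e; apply/subsetP => -[i j] hij.
pose z : 'M[R]_(n, m) := \matrix_(i', j') (if j' == j then (i' == i)%:R
   else (i' == @kmin _ _ _ v tau i j')%:R).
have hz : allocation z.
  split=> [i' j'|j']; first by rewrite mxE; case: ifP => _; rewrite ler0n.
  case: (eqVneq j' j) => [->|hj].
    rewrite (bigD1 i) //= mxE !eqxx big1 ?addr0 // => i2 /negbTE hi.
    by rewrite mxE eqxx hi.
  rewrite (bigD1 (@kmin _ _ _ v tau i j')) //= mxE (negbTE hj) eqxx big1 ?addr0 //.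
  by move=> i2 /negbTE hi; rewrite mxE (negbTE hj) hi.
have hcg : consumption_graph z \subset G_tau v tau.
  apply/subsetP => -[i' j']; rewrite inE /= mxE.
  case: (eqVneq j' j) => [->|hj].
    by case: (eqVneq i' i) => [->|_]; rewrite ?ltxx.
  case: (eqVneq i' (@kmin _ _ _ v tau i j')) => [->|_]; last by rewrite ltxx.
  move=> _; rewrite inE /=; apply/forallP => i2; exact: kminP.
have := (@key _ _ _ v hv _ htau _ hz).2 hcg; rewrite e => /(@key _ _ _ v hv _ htau' _ hz) /subsetP; apply.
by rewrite inE /= mxE eqxx eqxx ltr01.
Qed.

Section GfDef.
Variables (R : realFieldType) (n m : nat) (v : 'M[R]_(n, m)).
Definition Gf (F : 'rV[R]_n -> Prop) : {set 'I_n * 'I_m} :=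
  match excluded_middle_informative (is_face v F) with
  | left h => G_tau v (proj1_sig (constructive_indefinite_description _ h))
  | right _ => set0
  end.
Lemma Gf_spec F : is_face v F -> exists tau : 'rV[R]_n,
  (forall i, 0 < tau 0 i) /\ F = face_of v tau /\ Gf F = G_tau v tau.
Proof.
rewrite /Gf; case: excluded_middle_informative => // h _.
case: constructive_indefinite_description => tau [h1 h2] /=; by exists tau.
Qed.
End GfDef.

Theorem lemma1 (R : realFieldType) (n m : nat) (v : 'M[R]_(n, m))
  (hv : forall i j, v i j < 0) :
  exists Gf : ('rV[R]_n -> Prop) -> {set 'I_n * 'I_m},
    (forall F, is_face v F -> in_MWW v (Gf F)) /\
    (forall F1 F2, is_face v F1 -> is_face v F2 -> Gf F1 = Gf F2 -> F1 = F2) /\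
    (forall G, in_MWW v G -> exists F, is_face v F /\ Gf F = G) /\
    (forall F, is_face v F -> forall z : 'M[R]_(n, m), allocation z ->
       (F (util v z) <-> consumption_graph z \subset Gf F)).
Proof.
exists (@Gf R n m v); split; [|split; [|split]].
- move=> F /Gf_spec [tau [ht [_ ->]]]; by exists tau.
- move=> F1 F2 /Gf_spec [t1 [h1 [e1 ->]]] /Gf_spec [t2 [h2 [e2 ->]]] eG.
  rewrite e1 e2; apply: functional_extensionality => u.
  apply: propositional_extensionality; split => hf.
    have [z [hz eu]] := hf.1; subst u.
    by apply/(@key _ _ _ v hv _ h2 _ hz); rewrite -eG; apply/(@key _ _ _ v hv _ h1 _ hz).
  have [z [hz eu]] := hf.1; subst u.
  by apply/(@key _ _ _ v hv _ h1 _ hz); rewrite eG; apply/(@key _ _ _ v hv _ h2 _ hz).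
- move=> G [tau [ht ->]]; exists (face_of v tau); split; first by exists tau.
  have [t' [h' [e' ->]]] := @Gf_spec _ _ _ v _ (ex_intro _ tau (conj ht erefl) : is_face v (face_of v tau)).
  apply/eqP; rewrite eqEsubset; apply/andP; split; apply: face_graph_sub => //.
- move=> F /Gf_spec [tau [ht [-> ->]]] z hz; exact: key.
Qed.
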